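(* Let $k\geq 1$ be an integer and $\lambda>0$ a real number. Let $f_k(x;\lambda)$ denote the probability mass function of the Poisson distribution of order $k$ with parameter $\lambda$. Then every mode $m_{k,\lambda}$ of $f_k(\cdot;\lambda)$ (i.e., every nonnegative integer $x$ at which $f_k(x;\lambda)$ attains its maximum over $x\in\{0,1,2,\dots\}$) satisfies \[ \left\lfloor \frac{\lambda k(k+1)}{2}\right\rfloor - \frac{k(k+1)}{2} + 1 - \delta_{k,1} \;\leq\; m_{k,\lambda} \;\leq\; \left\lfloor \frac{\lambda k(k+1)}{2}\right\rfloor, \] where $\delta_{k,1}$ is the Kronecker delta ($\delta_{k,1}=1$ if $k=1$ and $0$ otherwise).
   Context: For a positive integer $k$ and real $\lambda>0$, the Poisson distribution of order $k$ with parameter $\lambda$ is the distribution on $\{0,1,2,\dots\}$ with probability mass function \[ f_k(x;\lambda)=\sum e^{-k\lambda}\frac{\lambda^{x_1+x_2+\cdots+x_k}}{x_1!\,x_2!\cdots x_k!},\qquad x=0,1,2,\dots, \] where the sum is over all $k$-tuples $(x_1,\dots,x_k)$ of nonnegative integers with $x_1+2x_2+\cdots+kx_k=x$. Equivalently, its probability generating function is $\sum_{x\ge0}f_k(x;\lambda)s^x=e^{\lambda(-k+s+s^2+\cdots+s^k)}$. For $k=1$ it is the ordinary Poisson distribution. $\lfloor u\rfloor$ denotes the greatest integer not exceeding $u$. *)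

(* Defs.v *)
From HB Require Import structures.
From mathcomp Require Import all_boot all_order all_algebra.
From mathcomp Require Import all_classical all_reals all_analysis.
Set Implicit Arguments. Unset Strict Implicit. Unset Printing Implicit Defensive.
Import Order.TTheory GRing.Theory Num.Theory.
Local Open Scope ring_scope.

(* Poisson distribution of order k with parameter lam:
   f_k(x;lam) = sum over (x_1,...,x_k) in N^k with x_1 + 2 x_2 + ... + k x_k = x
                of e^{-k lam} lam^{x_1+...+x_k} / (x_1! ... x_k!).
   A tuple is a finite function t : 'I_k -> 'I_(x+1) (each x_i <= x necessarily),
   where t i stands for x_{i+1}. *)
Definition poisson_order_pmf (R : realType) (k : nat) (lam : R) (x : nat) : R :=
  \sum_(t : {ffun 'I_k -> 'I_x.+1} | (\sum_(i < k) (i.+1 * t i))%N == x)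
     expR (- (k%:R * lam)) * lam ^+ (\sum_(i < k) (t i : nat))%N
       / (\prod_(i < k) ((t i : nat)`!))%:R.

Definition is_mode (R : realType) (f : nat -> R) (x : nat) : Prop :=
  forall y : nat, f y <= f x.

(* Main.v *)
Require Import Defs.
From HB Require Import structures.
From mathcomp Require Import all_boot all_order all_algebra.
From mathcomp Require Import all_classical all_reals all_analysis.
From mathcomp Require Import ring lra zify.
Import Order.TTheory GRing.Theory Num.Theory.
Local Open Scope ring_scope.

Lemma lin3 (R : realType) (I : finType) (P : pred I) (al be ga : R) (u v z : I -> R) :
  \sum_(t | P t) (al * u t + be * v t + ga * z t) =
  al * \sum_(t | P t) u t + be * \sum_(t | P t) v t + ga * \sum_(t | P t) z t.
Proof. by rewrite !big_split /= -!mulr_sumr. Qed.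

Lemma cs (R : realType) (I : finType) (P : pred I) (a x : I -> R) :
  (forall t, P t -> 0 <= a t) ->
  (\sum_(t | P t) a t * x t) ^+ 2 <=
  (\sum_(t | P t) a t) * \sum_(t | P t) a t * x t ^+ 2.
Proof.
move=> a0.
set A := \sum_(t | P t) a t; set B := \sum_(t | P t) a t * x t.
set C := \sum_(t | P t) a t * x t ^+ 2.
have H : 0 <= \sum_(s | P s) \sum_(t | P t) a s * a t * (x s - x t) ^+ 2.
  apply: sumr_ge0 => s Ps; apply: sumr_ge0 => t Pt.
  by rewrite mulr_ge0 ?sqr_ge0 // mulr_ge0 ?a0.
have E : \sum_(s | P s) \sum_(t | P t) a s * a t * (x s - x t) ^+ 2
   = \sum_(s | P s) (A * (a s * x s ^+ 2) + (-2 * B) * (a s * x s) + C * a s).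
  apply: eq_bigr => s _.
  transitivity (\sum_(t | P t) ((a s * x s ^+ 2) * a t + (-2 * a s * x s) * (a t * x t)
       + a s * (a t * x t ^+ 2))).
    by apply: eq_bigr => t _; ring.
  rewrite lin3 -/A -/B -/C; ring.
rewrite E lin3 -/A -/B -/C in H.
lra.
Qed.

Section S.
Variables (R : realType) (k : nat) (lam : R).
Hypothesis lam_gt0 : 0 < lam.

Definition wtu (u : 'I_k -> nat) : nat := (\sum_(j < k) j.+1 * u j)%N.
Definition szu (u : 'I_k -> nat) : nat := (\sum_(j < k) u j)%N.
Definition fcu (u : 'I_k -> nat) : nat := (\prod_(j < k) (u j)`!)%N.
Definition w (u : 'I_k -> nat) : R := lam ^+ szu u / (fcu u)%:R.

Lemma fcu_gt0 u : (0 < fcu u)%N.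
Proof. by rewrite /fcu; apply/prodn_gt0 => j; rewrite fact_gt0. Qed.

Lemma w_ge0 u : 0 <= w u.
Proof. by rewrite /w divr_ge0 // exprn_ge0 // ltW. Qed.

Section Incr.
Variables (u v : 'I_k -> nat) (i : 'I_k).
Hypothesis uv : forall j, v j = (u j + (j == i))%N.

Lemma sum_incr (a : 'I_k -> nat) :
  (\sum_(j < k) a j * v j = \sum_(j < k) a j * u j + a i)%N.
Proof.
under eq_bigr do rewrite uv mulnDr.
rewrite big_split /=; congr (_ + _)%N.
rewrite (bigD1 i) //= eqxx muln1 big1 ?addn0 // => j /negbTE ->.
by rewrite muln0.
Qed.

Lemma wtu_incr : wtu v = (wtu u + i.+1)%N.
Proof. exact: sum_incr. Qed.

Lemma szu_incr : szu v = (szu u + 1)%N.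
Proof.
have := sum_incr (fun _ => 1%N).
by under eq_bigr do rewrite mul1n; under [in RHS]eq_bigr do rewrite mul1n.
Qed.

Lemma fcu_incr : fcu v = ((u i).+1 * fcu u)%N.
Proof.
rewrite /fcu (bigD1 i) //= [in RHS](bigD1 i) //= uv eqxx addn1 factS mulnA.
congr (_ * _)%N; apply: eq_bigr => j /negbTE ji; by rewrite uv ji addn0.
Qed.

Lemma w_incr : w v * (v i)%:R = lam * w u.
Proof.
rewrite /w szu_incr fcu_incr uv eqxx !addn1 exprS natrM.
have h1 : ((u i).+1%:R : R) != 0 by rewrite pnatr_eq0.
have h2 : ((fcu u)%:R : R) != 0 by rewrite pnatr_eq0 -lt0n fcu_gt0.
field; exact/andP; split.
Qed.
End Incr.

Lemma wtu_ge u (i : 'I_k) : (i.+1 * u i <= wtu u)%N.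
Proof. by rewrite /wtu (bigD1 i) //= leq_addr. Qed.

Section Fix.
Variable n : nat.
Local Notation T := {ffun 'I_k -> 'I_n.+1}.
Definition tv (t : T) : 'I_k -> nat := fun j => t j.

Definition incr (i : 'I_k) (s : T) : T := [ffun j => inord (s j + (j == i))].
Definition decr (i : 'I_k) (t : T) : T := [ffun j => inord (t j - (j == i))].

Lemma incrE (i : 'I_k) (s : T) : (s i < n)%N -> forall j, tv (incr i s) j = (tv s j + (j == i))%N.
Proof.
move=> si j; rewrite /tv ffunE inordK //.
case: (eqVneq j i) => [->|ji] /=; first by rewrite addn1 ltnS.
by rewrite addn0.
Qed.

Lemma decr_incr i (s : T) : (s i < n)%N -> decr i (incr i s) = s.
Proof.
move=> si; apply/ffunP => j; apply/val_inj.
by have := incrE _ _ si j; rewrite /tv => e; rewrite ffunE /= e addnK inord_val.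
Qed.

Lemma shift y (i : 'I_k) (c : nat -> R) : (i.+1 <= y)%N -> (y <= n)%N ->
 \sum_(t : T | wtu (tv t) == y) w (tv t) * ((t i)%:R * c (t i))
 = lam * \sum_(s : T | wtu (tv s) == (y - i.+1)%N) w (tv s) * c (s i).+1.
Proof.
move=> iy yn.
rewrite (bigID (fun t : T => 0 < t i)%N) /= [X in _ + X]big1 ?addr0; last first.
  by move=> t /andP[_]; rewrite -eqn0Ngt => /eqP ->; rewrite mul0r mulr0.
rewrite (reindex_onto (incr i) (decr i)); last first.
  move=> t /andP[_ ti]; apply/ffunP => j; rewrite !ffunE; apply/val_inj => /=.
  have h1 : (t j - (j == i) < n.+1)%N.
    exact: (@leq_ltn_trans _ _ _ (leq_subr _ _) (ltn_ord _)).
  rewrite (inordK h1) subnK ?inord_val //.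
  by case: (eqVneq j i) => [->|].
rewrite mulr_sumr; apply: eq_big => s.
  have [si|] := ltnP (s i) n.
    rewrite decr_incr // eqxx andbT.
    have e := incrE _ _ si.
    have -> : wtu (tv (incr i s)) = (wtu (tv s) + i.+1)%N by apply: wtu_incr.
    have -> : (0 < incr i s i)%N by have := e i; rewrite /tv => ->; rewrite eqxx addn1.
    rewrite andbT; apply/eqP/eqP => [<-|->]; first by rewrite addnK.
    by rewrite subnK.
  move=> ns.
  have -> : incr i s i = ord0.
    apply/val_inj; rewrite ffunE /= eqxx addn1 /inord /insubd insubF //.
    by apply/negbTE; rewrite -leqNgt ltnS.
  rewrite /= andbF andFb; apply/esym/negbTE; apply/eqP => e.
  have := wtu_ge (tv s) i; rewrite e /tv => h.
  have : (i.+1 * n <= y - i.+1)%N := leq_trans (leq_mul (leqnn _) ns) h.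
  rewrite mulSn; move: iy yn; clear; lia.
move=> /andP[/andP[_ pos] _].
have si : (s i < n)%N.
  rewrite ltnNge; apply/negP => ns; move: pos.
  by rewrite ffunE /= eqxx addn1 /inord /insubd insubF //= ; apply/negbTE; rewrite -leqNgt ltnS.
have e := incrE _ _ si.
have ei : (incr i s i : nat) = (s i).+1 by have := e i; rewrite /tv eqxx addn1.
rewrite ei mulrA.
have := w_incr _ _ _ e; rewrite /tv ei => ->.
by rewrite mulrA.
Qed.

Definition F y := \sum_(t : T | wtu (tv t) == y) w (tv t).

Lemma F_ge0 y : 0 <= F y.
Proof. by apply: sumr_ge0 => t _; apply: w_ge0. Qed.

Lemma zero_sum y (i : 'I_k) (c : nat -> R) : (y < i.+1)%N ->
 \sum_(t : T | wtu (tv t) == y) w (tv t) * ((t i)%:R * c (t i)) = 0.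
Proof.
move=> yi; apply: big1 => t /eqP e.
have := wtu_ge (tv t) i; rewrite e /tv => h.
have -> : (t i : nat) = 0%N.
  move: h yi; set a := (t i : nat); set b := (i : nat); clear; nia.
by rewrite mul0r mulr0.
Qed.

Lemma rec y : y%:R * F y =
  \sum_(i < k) (i.+1)%:R * \sum_(t : T | wtu (tv t) == y) w (tv t) * ((t i)%:R * 1).
Proof.
rewrite /F mulr_sumr.
under [RHS]eq_bigr do rewrite mulr_sumr.
rewrite exchange_big /=; apply: eq_bigr => t /eqP <-.
rewrite /wtu natr_sum mulrC mulr_sumr; apply: eq_bigr => i _.
by rewrite mulr1 natrM; ring.
Qed.

Lemma F0 : 1 <= F 0.
Proof.
pose t0 : T := [ffun _ => ord0].
have wt0 : wtu (tv t0) == 0%N.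
  by rewrite /wtu big1 // => j _; rewrite /tv ffunE muln0.
rewrite /F (bigD1 t0) //= ler_wpDr //; first by apply: sumr_ge0 => t _; exact: w_ge0.
rewrite /w /szu /fcu big1 => [|j _]; last by rewrite /tv ffunE.
by rewrite big1 => [|j _]; rewrite ?expr0 ?divr1 // /tv ffunE.
Qed.
End Fix.
Arguments tv {n}.

Lemma F_widen {p q y} : (y <= p)%N -> (p <= q)%N -> F p y = F q y.
Proof.
move=> yp pq.
have pq' : (p.+1 <= q.+1)%N by [].
pose h (s : {ffun 'I_k -> 'I_p.+1}) : {ffun 'I_k -> 'I_q.+1} :=
  [ffun j => widen_ord pq' (s j)].
pose h' (t : {ffun 'I_k -> 'I_q.+1}) : {ffun 'I_k -> 'I_p.+1} :=
  [ffun j => inord (t j)].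
have tvh s : tv (h s) = tv s by apply: funext => j; rewrite /tv ffunE.
rewrite /F (reindex_onto h h'); last first.
  move=> t /eqP e; apply/ffunP => j; apply/val_inj; rewrite !ffunE /= inordK //.
  have := wtu_ge (tv t) j; rewrite e /tv => hj.
  rewrite ltnS; apply: leq_trans yp; apply: leq_trans hj.
  by rewrite leq_pmull.
apply: eq_big => s; last by rewrite tvh.
have -> : h' (h s) = s.
  by apply/ffunP => j; apply/val_inj; rewrite !ffunE /= inord_val.
by rewrite tvh eqxx andbT.
Qed.

Lemma pmfE y : poisson_order_pmf k lam y = expR (- (k%:R * lam)) * F y y.
Proof.
rewrite /poisson_order_pmf /F mulr_sumr; apply: eq_bigr => t _.
by rewrite /w /szu /fcu /tv mulrA.
Qed.

Lemma pmfE' n y : (y <= n)%N -> poisson_order_pmf k lam y = expR (- (k%:R * lam)) * F n y.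
Proof. by move=> yn; rewrite pmfE (F_widen (leqnn y) yn). Qed.

Section Main.
Variable m : nat.
Hypothesis k1 : (0 < k)%N.
Hypothesis Hm : forall y, poisson_order_pmf k lam y <= poisson_order_pmf k lam m.
Let n := (m + k)%N.
Let G := F n.
Let Bt y (i : 'I_k) := \sum_(t : {ffun 'I_k -> 'I_n.+1} | wtu (tv t) == y) w (tv t) * ((t i)%:R * 1).

Lemma Gmode y : (y <= n)%N -> G y <= G m.
Proof.
move=> yn; have := Hm y; rewrite (pmfE' _ _ yn) (pmfE' _ _ (leq_addr k m : (m <= n)%N)).
by rewrite ler_pM2l // expR_gt0.
Qed.

Lemma Gm_gt0 : 0 < G m.
Proof. have h1 := Gmode 0 (leq0n n); have h2 := F0 n; rewrite /G in h1 *; lra. Qed.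

Lemma Bt_eq y (i : 'I_k) : (i < y)%N -> (y <= n)%N -> Bt y i = lam * G (y - i.+1)%N.
Proof.
move=> iy yn; rewrite /Bt (shift _ _ _ (fun _ => 1)) //.
by congr (_ * _); apply: eq_bigr => t _; rewrite mulr1.
Qed.

Lemma Bt_le y (i : 'I_k) : (y <= m)%N -> Bt y i <= lam * G m.
Proof.
move=> ym; have yn : (y <= n)%N by apply: leq_trans ym (leq_addr _ _).
have [iy|yi] := ltnP i y.
  rewrite Bt_eq // ler_pM2l // Gmode //; apply: leq_trans yn; exact: leq_subr.
rewrite /Bt (zero_sum _ _ _ (fun _ => 1)) ?ltnS //; apply: mulr_ge0; [exact: ltW | exact: F_ge0].
Qed.

Lemma upper : m%:R <= lam * \sum_(i < k) (i.+1)%:R.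
Proof.
have g0 := Gm_gt0.
have : m%:R * G m <= lam * (\sum_(i < k) (i.+1)%:R) * G m.
  rewrite /G rec -/G (mulrC lam) -mulrA mulr_suml; apply: ler_sum => i _.
  by rewrite ler_wpM2l // (Bt_le m i).
by rewrite ler_pM2r.
Qed.

Lemma step (i : 'I_k) : lam * G m <= (lam + 1) * G (m + i.+1)%N.
Proof.
set y := (m + i.+1)%N.
have yn : (y <= n)%N by rewrite /y /n leq_add2l.
have iy : (i < y)%N by apply: leq_addl.
have ym : (y - i.+1)%N = m by rewrite /y addnK.
set B := \sum_(t : {ffun 'I_k -> 'I_n.+1} | wtu (tv t) == y) w (tv t) * (t i)%:R.
set C := \sum_(t : {ffun 'I_k -> 'I_n.+1} | wtu (tv t) == y) w (tv t) * (t i)%:R ^+ 2.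
have hB : B = lam * G m.
  rewrite -ym -Bt_eq //; apply: eq_bigr => t _; by rewrite mulr1.
have hC : C <= lam * (lam * G m + G m).
  have -> : C = \sum_(t : {ffun 'I_k -> 'I_n.+1} | wtu (tv t) == y)
       w (tv t) * ((t i)%:R * (fun x : nat => x%:R : R) (t i)).
    by apply: eq_bigr => t _; rewrite expr2.
  rewrite shift // ym ler_wpM2l ?(ltW lam_gt0) //.
  have -> : \sum_(s : {ffun 'I_k -> 'I_n.+1} | wtu (tv s) == m) w (tv s) * (s i).+1%:R
     = Bt m i + G m.
    rewrite /Bt /G /F -big_split /=; apply: eq_bigr => t _.
    by rewrite -natr1 mulr1 mulrDr mulr1.
  by rewrite lerD2r Bt_le.
have CS : B ^+ 2 <= G y * C.
  by apply: cs => t _; apply: w_ge0.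
have g0 := Gm_gt0.
have gy : 0 <= G y by apply: F_ge0.
have h1 : (lam * G m) * (lam * G m) <= (lam * G m) * ((lam + 1) * G y).
  rewrite hB expr2 in CS.
  apply: le_trans CS _.
  have : G y * C <= G y * (lam * (lam * G m + G m)) by rewrite ler_wpM2l.
  move=> h; apply: le_trans h _; rewrite [X in _ <= X](_ : _ = G y * (lam * (lam * G m + G m))) //; ring.
by rewrite ler_pM2l ?mulr_gt0 in h1.
Qed.

Lemma lower : lam * (lam * \sum_(i < k) (i.+1)%:R + k%:R) <= (lam + 1) * (m + k)%N%:R.
Proof.
have g0 := Gm_gt0.
have i0lt : (k.-1 < k)%N by rewrite ltn_predL.
pose i0 : 'I_k := Ordinal i0lt.
set S := \sum_(i < k) (i.+1)%:R * G (m + k - i.+1)%N.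
have R1 : (m + k)%N%:R * G (m + k)%N = lam * S.
  rewrite /G rec -/G /S mulr_sumr; apply: eq_bigr => i _.
  rewrite -/(Bt _ i) Bt_eq //; first by rewrite mulrCA.
  by apply: leq_trans (ltn_ord i) (leq_addl _ _).
have L : \sum_(i < k) ((i.+1)%:R * (lam * G m) + (i.+1)%:R * ((i == i0)%:R * G m))
         <= (lam + 1) * S.
  rewrite /S [X in _ <= X]mulr_sumr; apply: ler_sum => i _.
  rewrite -mulrDr mulrCA ler_wpM2l //.
  have [->|ne] := eqVneq i i0.
    rewrite /= prednK // addnK; lra.
  have ik : (i.+1 < k)%N.
    rewrite ltn_neqAle ltn_ord andbT; apply: contra ne => /eqP e.
    by apply/eqP/val_inj; exact: (congr1 predn e).
  have jk : (k - i.+2 < k)%N by rewrite ltn_subrL k1 andbT.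
  have := step (Ordinal jk); rewrite /=.
  have -> : (m + (k - i.+2).+1 = m + k - i.+1)%N.
    by move: ik; clear; lia.
  lra.
have E : \sum_(i < k) ((i.+1)%:R * (lam * G m) + (i.+1)%:R * ((i == i0)%:R * G m))
         = (lam * \sum_(i < k) (i.+1)%:R + k%:R) * G m.
  rewrite big_split /= -mulr_suml [X in _ + X](bigD1 i0) //= [X in _ + (_ + X)]big1; last first.
    by move=> i /negbTE ->; rewrite mul0r mulr0.
  rewrite eqxx prednK // addr0 mulr1n mul1r; ring.
have Gk : G (m + k)%N <= G m by apply: Gmode; rewrite /n.
have : (lam * \sum_(i < k) (i.+1)%:R + k%:R) * G m * lam <=
       ((lam + 1) * (m + k)%N%:R) * G m.
  rewrite -E mulrC; apply: le_trans (ler_wpM2l (ltW lam_gt0) L) _.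
  have h : (lam + 1) * (m + k)%N%:R * G (m + k)%N <= (lam + 1) * (m + k)%N%:R * G m.
    by rewrite ler_wpM2l // mulr_ge0 // ?addr_ge0 // ltW.
  apply: le_trans h; rewrite -mulrA R1; lra.
rewrite -mulrA [G m * lam]mulrC mulrA ler_pM2r //.
by rewrite mulrC.
Qed.
End Main.
End S.

Lemma sum_succ_double k : ((\sum_(i < k) i.+1).*2 = k * k.+1)%N.
Proof.
elim: k => [|k IH]; first by rewrite big_ord0.
rewrite big_ord_recr /= doubleD IH; lia.
Qed.

Theorem theorem2p1 (R : realType) (k : nat) (lam : R) (m : nat) :
  (1 <= k)%N -> 0 < lam ->
  is_mode (poisson_order_pmf k lam) m ->
  Num.floor (lam * (k * k.+1)%:R / 2) - (k * k.+1)./2%:Z + 1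
      - (if k == 1%N then 1 else 0) <= m%:Z
  /\ m%:Z <= Num.floor (lam * (k * k.+1)%:R / 2).
Proof.
move=> k1 l0 Hm.
have U := upper _ _ _ l0 _ Hm.
have L := lower _ _ _ l0 _ k1 Hm.
set Kn := (\sum_(i < k) i.+1)%N.
have KnE : (k * k.+1)./2 = Kn by rewrite -sum_succ_double doubleK.
have KsE : (\sum_(i < k) (i.+1)%:R : R) = Kn%:R by rewrite /Kn natr_sum.
have xE : lam * (k * k.+1)%:R / 2 = lam * Kn%:R.
  by rewrite -sum_succ_double -mul2n natrM; field.
rewrite KsE in U L; rewrite xE KnE; split; last first.
  by rewrite floor_ge_int.
set d := (if k == 1%N then 1 else 0) : int.
suff h : Num.floor (lam * Kn%:R) < (m + Kn)%:Z + d by move: h; clear; lia.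
rewrite floor_lt_int /d.
have K2 := sum_succ_double k; rewrite -/Kn in K2.
case: eqP => [k1e|kn1].
  have Kn1 : Kn = 1%N by move: K2; rewrite k1e; lia.
  rewrite Kn1 k1e in L *; rewrite intrD -pmulrn ?mulr1z natrD.
  rewrite natrD in L; nra.
have Kk : (k.+1 <= Kn)%N by move: K2 kn1 k1; clear; nia.
have Kk' : (k.+1)%:R <= Kn%:R :> R by rewrite ler_nat.
rewrite intrD -pmulrn ?mulr0z addr0 natrD; rewrite natrD in L.
rewrite -natr1 in Kk'.
have h : (lam + 1) * (lam * Kn%:R - m%:R - Kn%:R) <= k%:R - Kn%:R by nra.
nra.
Qed.
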